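(* Let $A,B$ be unital $k$-algebras and $f:B\to A$ an algebra homomorphism, not necessarily unital, such that $f(1_B)$ lies in the center of $A$. Then the modulation of $f$ is invertible in $\mathsf{Alg}$ if and only if $f$ is an isomorphism from $B$ onto $A\cdot f(1_B)$ and $f(1_B)$ is not a zero divisor in $A$.
   Context: $k$ is a commutative ring; all algebras are unital $k$-algebras. The category $\mathsf{Alg}$ has unital $k$-algebras as objects and, as morphisms to $A$ from $B$, isomorphism classes of biunital $(A,B)$-bimodules, composed by $X\otimes_B Y$; invertible morphisms are Morita equivalences. The modulation of a not necessarily unital homomorphism $f:B\to A$ is the left ideal $A\cdot f(1_B)\subset A$ with the biunital $(A,B)$-bimodule structure $a\cdot x\cdot b=a\,x\,f(b)$. *)

(* Defs.v *)
From HB Require Import structures.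
From mathcomp Require Import all_boot all_algebra.
From Stdlib Require Import ProofIrrelevance.
Set Implicit Arguments. Unset Strict Implicit. Unset Printing Implicit Defensive.
Import GRing.Theory.
Local Open Scope ring_scope.

(* The carrier is an abelian group given by explicit
   operations, so that sub-objects (e.g. left ideals) can be built directly. *)
Record bimod (k : comPzRingType) (R S : algType k) := Bimod {
  bm_car :> Type;
  bm_zero : bm_car;
  bm_add : bm_car -> bm_car -> bm_car;
  bm_opp : bm_car -> bm_car;
  bm_l : R -> bm_car -> bm_car;
  bm_r : bm_car -> S -> bm_car;
  bm_addA : forall x y z, bm_add x (bm_add y z) = bm_add (bm_add x y) z;
  bm_addC : forall x y, bm_add x y = bm_add y x;
  bm_add0 : forall x, bm_add bm_zero x = x;
  bm_addN : forall x, bm_add (bm_opp x) x = bm_zero;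
  bm_lD : forall r x y, bm_l r (bm_add x y) = bm_add (bm_l r x) (bm_l r y);
  bm_Dl : forall r r' x, bm_l (r + r') x = bm_add (bm_l r x) (bm_l r' x);
  bm_lM : forall r r' x, bm_l (r * r') x = bm_l r (bm_l r' x);
  bm_l1 : forall x, bm_l 1 x = x;
  bm_rD : forall s x y, bm_r (bm_add x y) s = bm_add (bm_r x s) (bm_r y s);
  bm_Dr : forall s s' x, bm_r x (s + s') = bm_add (bm_r x s) (bm_r x s');
  bm_rM : forall s s' x, bm_r x (s * s') = bm_r (bm_r x s) s';
  bm_r1 : forall x, bm_r x 1 = x;
  bm_lr : forall r x s, bm_l r (bm_r x s) = bm_r (bm_l r x) s;
  bm_kcentral : forall (c : k) x, bm_l (c%:A) x = bm_r x (c%:A)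
}.

(* "X (x)_S Y is isomorphic to R as (R,R)-bimodules", for X an (R,S)- and Y an
   (S,R)-bimodule, expressed via the universal property of the tensor
   product: there is an S-balanced biadditive (R,R)-bilinear map
   mu : X x Y -> R which is universal among S-balanced biadditive maps. *)
Definition biadd_balanced (k : comPzRingType) (R S : algType k)
  (X : bimod R S) (Y : bimod S R) (M : zmodType) (beta : X -> Y -> M) : Prop :=
  [/\ forall x x' y, beta (bm_add x x') y = beta x y + beta x' y,
      forall x y y', beta x (bm_add y y') = beta x y + beta x y' &
      forall x s y, beta (bm_r x s) y = beta x (bm_l s y)].

Definition tensor_iso_unit (k : comPzRingType) (R S : algType k)
  (X : bimod R S) (Y : bimod S R) : Prop :=
  exists mu : X -> Y -> R,
    [/\ biadd_balanced mu,
        forall r x y, mu (bm_l r x) y = r * mu x y,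
        forall x y r, mu x (bm_r y r) = mu x y * r &
        forall (M : zmodType) (beta : X -> Y -> M), biadd_balanced beta ->
          exists phi : R -> M,
            [/\ {morph phi : u v / u + v >-> u + v},
                (forall x y, beta x y = phi (mu x y)) &
                forall psi : R -> M, {morph psi : u v / u + v >-> u + v} ->
                  (forall x y, beta x y = psi (mu x y)) -> psi = phi]].

(* The class of X : (R,S)-bimodule is invertible in Alg (a Morita equivalence):
   there is Y with X (x)_S Y ~ R and Y (x)_R X ~ S. *)
Definition invertible_bimod (k : comPzRingType) (R S : algType k)
  (X : bimod R S) : Prop :=
  exists Y : bimod S R, tensor_iso_unit X Y /\ tensor_iso_unit Y X.

Definition nu_alg_hom (k : comPzRingType) (B A : algType k) (f : B -> A) : Prop :=
  [/\ forall x y, f (x + y) = f x + f y,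
      forall (c : k) x, f (c *: x) = c *: f x &
      forall x y, f (x * y) = f x * f y].

Definition in_left_ideal (k : comPzRingType) (A : algType k) (e x : A) : Prop :=
  exists a : A, x = a * e.

Section Modulation.
Variables (k : comPzRingType) (A B : algType k) (f : B -> A).
Hypothesis hf : nu_alg_hom f.

Let e := f 1.
Let T := {x : A | in_left_ideal e x}.

Lemma mod_ideal0 : in_left_ideal e 0.
Proof. by exists 0; rewrite mul0r. Qed.
Lemma mod_idealD x y : in_left_ideal e x -> in_left_ideal e y -> in_left_ideal e (x + y).
Proof. by move=> [a ->] [b ->]; exists (a + b); rewrite mulrDl. Qed.
Lemma mod_idealN x : in_left_ideal e x -> in_left_ideal e (- x).
Proof. by move=> [a ->]; exists (- a); rewrite mulNr. Qed.
Lemma mod_ideall a x : in_left_ideal e x -> in_left_ideal e (a * x).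
Proof. by move=> [b ->]; exists (a * b); rewrite mulrA. Qed.
Lemma mod_idealr x b : in_left_ideal e x -> in_left_ideal e (x * f b).
Proof.
case: hf => _ _ hM [a ->]; exists (a * f b).
by rewrite /e -mulrA -hM mul1r -{1}[b](mulr1 b) hM mulrA.
Qed.

Let m0 : T := exist _ 0 mod_ideal0.
Let mD (x y : T) : T := exist _ (proj1_sig x + proj1_sig y)
  (mod_idealD (proj2_sig x) (proj2_sig y)).
Let mN (x : T) : T := exist _ (- proj1_sig x) (mod_idealN (proj2_sig x)).
Let ml (a : A) (x : T) : T := exist _ (a * proj1_sig x) (mod_ideall a (proj2_sig x)).
Let mr (x : T) (b : B) : T := exist _ (proj1_sig x * f b) (mod_idealr b (proj2_sig x)).

Let sigE (x y : T) : proj1_sig x = proj1_sig y -> x = y.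
Proof.
case: x y => [x px] [y py] /= exy; subst y.
by rewrite (proof_irrelevance _ px py).
Qed.

Local Ltac sg := move=> *; apply: sigE => /=.


Definition modulation : bimod A B.
Proof.
refine (@Bimod k A B T m0 mD mN ml mr _ _ _ _ _ _ _ _ _ _ _ _ _ _).
- by sg; rewrite addrA.
- by sg; rewrite addrC.
- by sg; rewrite add0r.
- by sg; rewrite addNr.
- by sg; rewrite mulrDr.
- by sg; rewrite mulrDl.
- by sg; rewrite mulrA.
- by sg; rewrite mul1r.
- by sg; rewrite mulrDl.
- by case: hf => hD _ _; sg; rewrite hD mulrDr.
- by case: hf => _ _ hM; sg; rewrite hM mulrA.
- move=> [x [a ha]]; apply: sigE => /=; rewrite ha.
  by case: hf => _ _ hM; rewrite -mulrA -hM mul1r.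
- by sg; rewrite mulrA.
- move=> c [x [a ha]]; apply: sigE => /=; rewrite ha.
  case: hf => _ hZ hM; rewrite hZ -scalerAr -mulrA -hM mul1r.
  by rewrite -!scalerAl mul1r.
Defined.
End Modulation.

(* Main.v *)
Require Import Defs.
From HB Require Import structures.
From mathcomp Require Import all_boot all_algebra.
From Stdlib Require Import ProofIrrelevance FunctionalExtensionality.
Import GRing.Theory.
Local Open Scope ring_scope.

Lemma sigE' (T : Type) (P : T -> Prop) (x y : {v | P v}) :
  proj1_sig x = proj1_sig y -> x = y.
Proof.
case: x y => [x px] [y py] /= exy; subst y.
by rewrite (proof_irrelevance _ px py).
Qed.

Lemma uniqT (k : comPzRingType) (R S : algType k) (X : bimod R S) (Y : bimod S R)
  (mu : X -> Y -> R)
  (muu : forall (M : zmodType) (beta : X -> Y -> M), biadd_balanced beta ->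
          exists phi : R -> M,
            [/\ {morph phi : u v / u + v >-> u + v},
                (forall x y, beta x y = phi (mu x y)) &
                forall psi : R -> M, {morph psi : u v / u + v >-> u + v} ->
                  (forall x y, beta x y = psi (mu x y)) -> psi = phi])
  (M : zmodType) (beta : X -> Y -> M) : biadd_balanced beta ->
  forall psi1 psi2 : R -> M,
  {morph psi1 : u v / u + v >-> u + v} -> {morph psi2 : u v / u + v >-> u + v} ->
  (forall x y, beta x y = psi1 (mu x y)) -> (forall x y, beta x y = psi2 (mu x y)) ->
  psi1 = psi2.
Proof.
move=> hb p1 p2 h1 h2 e1 e2; have [phi [_ _ hu]] := muu M beta hb.
by rewrite (hu _ h1 e1) (hu _ h2 e2).
Qed.

Section Inv.
Variables (k : comPzRingType) (A B : algType k) (f : B -> A).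
Hypothesis hf : nu_alg_hom f.
Hypothesis e1 : f 1 = 1.

Definition invY : bimod B A.
Proof.
refine (@Bimod k B A A 0 +%R -%R (fun b y => f b * y) (fun y a => y * a)
  _ _ _ _ _ _ _ _ _ _ _ _ _ _).
- by move=> *; rewrite addrA.
- by move=> *; rewrite addrC.
- by move=> *; rewrite add0r.
- by move=> *; rewrite addNr.
- by move=> *; rewrite mulrDr.
- by case: hf => hD _ _; move=> *; rewrite hD mulrDl.
- by case: hf => _ _ hM; move=> *; rewrite hM mulrA.
- by move=> *; rewrite e1 mul1r.
- by move=> *; rewrite mulrDl.
- by move=> *; rewrite mulrDr.
- by move=> *; rewrite mulrA.
- by move=> *; rewrite mulr1.
- by move=> *; rewrite mulrA.
- case: hf => _ hZ _; move=> c x; rewrite hZ e1 -scalerAl mul1r -scalerAr mulr1 //.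
Defined.
End Inv.

Lemma fwd (k : comPzRingType) (A B : algType k) (f : B -> A)
  (hf : nu_alg_hom f) (hcent : forall a : A, a * f 1 = f 1 * a) :
  invertible_bimod (modulation hf) ->
  ((injective f /\ (forall x : A, in_left_ideal (f 1) x -> exists b : B, f b = x))
   /\ (forall a : A, (a * f 1 = 0 \/ f 1 * a = 0) -> a = 0)).
Proof.
case=> Y [[mu [mubal mul mur muu]] [nu [nubal nur' nur muu']]].
have hf' := hf; case: hf' => hD hZ hM.
pose X := modulation hf.
have idem : f 1 * f 1 = f 1 by rewrite -hM mulr1.
have e1 : f 1 = 1.
  have := @uniqT _ _ _ _ _ mu muu A mu mubal id (fun a => a * f 1) (fun _ _ => erefl)
    (fun u v => mulrDl u v (f 1)) (fun _ _ => erefl).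
  have h : forall x y, mu x y = mu x y * f 1.
    move=> x y; rewrite hcent -mul; congr (mu _ y); apply: sigE' => /=.
    case: x => [v [a ha]] /=; rewrite ha.
    by rewrite mulrA -hcent -mulrA idem.
  move=> /(_ h) /(congr1 (fun g => g 1)) /=; rewrite mul1r => <- //.
have allI : forall v : A, in_left_ideal (f 1) v by move=> v; exists v; rewrite e1 mulr1.
have p1 := allI 1.
pose x1 : X := exist _ 1 p1.
split; last by move=> a; rewrite e1 mulr1 mul1r; case.
split.
- move=> b1 b2 hb.
  pose beta := fun (y : Y) (x : X) => nu y (bm_r x b1).
  have hbeta : biadd_balanced beta.
    case: nubal => n1 n2 n3; split.
    + by move=> *; rewrite /beta n1.
    + by move=> *; rewrite /beta bm_rD n2.
    + by move=> y s x; rewrite /beta n3 bm_lr.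
  have := @uniqT _ _ _ _ _ nu muu' B beta hbeta (fun s => s * b1) (fun s => s * b2)
    (fun u v => mulrDl u v b1) (fun u v => mulrDl u v b2).
  move=> /(_ (fun y x => nur y x b1)).
  have h2 : forall y x, beta y x = nu y x * b2.
    move=> y x; rewrite -nur /beta; congr (nu y _); apply: sigE' => /=.
    by rewrite hb.
  move=> /(_ h2) /(congr1 (fun g => g 1)) /=; rewrite !mul1r //.
- move=> a _.
  have pr : forall x : X, in_left_ideal (f 1) (proj1_sig x * a).
    by move=> x; apply: allI.
  pose rm (x : X) : X := exist _ (proj1_sig x * a) (pr x).
  case: nubal => n1 n2 n3.
  pose beta := fun (y : Y) (x : X) => nu y (rm x).
  have hbeta : biadd_balanced beta.
    split.
    + by move=> *; rewrite /beta n1.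
    + move=> y x x'; rewrite /beta -n2; congr (nu y _); apply: sigE' => /=.
      by rewrite mulrDl.
    + move=> y s x; rewrite /beta n3; congr (nu y _); apply: sigE' => /=.
      by rewrite mulrA.
  have [phi [phiD phiE _]] := muu' B beta hbeta.
  have phiL : forall t, phi t = t * phi 1.
    move=> t.
    pose beta2 := fun (y : Y) (x : X) => nu (bm_l t y) (rm x).
    have hb2 : biadd_balanced beta2.
      split.
      + by move=> *; rewrite /beta2 bm_lD n1.
      + move=> y x x'; rewrite /beta2 -n2; congr (nu _ _); apply: sigE' => /=.
        by rewrite mulrDl.
      + move=> y s x; rewrite /beta2 bm_lr n3; congr (nu _ _); apply: sigE' => /=.
        by rewrite mulrA.
    have := @uniqT _ _ _ _ _ nu muu' B beta2 hb2 (fun s => phi (t * s))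
      (fun s => t * phi s) (fun u v => etrans (congr1 phi (mulrDr t u v)) (phiD _ _))
      (fun u v => etrans (congr1 (fun z => t * z) (phiD u v)) (mulrDr _ _ _)).
    move=> /(_ (fun y x => esym (etrans (congr1 phi (esym (nur' t y x))) (esym (phiE _ _))))).
    move=> /(_ (fun y x => etrans (nur' _ _ _) (congr1 (fun z => t * z) (phiE _ _)))).
    by move=> /(congr1 (fun g => g 1)) /=; rewrite mulr1.
  pose b := phi 1; exists b.
  have hnu : forall y : Y, nu (bm_r y a) x1 = nu (bm_r y (f b)) x1.
    move=> y; rewrite !n3.
    have -> : bm_l (f b) x1 = bm_r x1 b by apply: sigE' => /=; rewrite mulr1 mul1r.
    rewrite nur -phiL -phiE /beta; congr (nu y _); apply: sigE' => /=.
    by rewrite mulr1 mul1r.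
  (* injectivity of y |-> nu y x1 tested through mu *)
  have hmu : forall x y, mu x (bm_r y a) = mu x (bm_r y (f b)).
    move=> x y.
    pose gam := fun (y' : Y) (x' : X) => mu x (bm_r y' (proj1_sig x')).
    case: mubal => m1 m2 m3.
    have hg : biadd_balanced gam.
      split.
      + by move=> *; rewrite /gam bm_rD m2.
      + by move=> *; rewrite /gam bm_Dr m2.
      + by move=> y' s x'; rewrite /gam -bm_rM.
    have [ph [_ phE _]] := muu' A gam hg.
    by rewrite -[bm_r y a]bm_r1 -[bm_r y (f b)]bm_r1 -[1]/(proj1_sig x1) -!/(gam _ _) !phE hnu.
  case: mubal => m1 m2 m3.
  pose del := fun (x : X) (y : Y) => mu x (bm_r y a).
  have hd : biadd_balanced del.
    split.
    + by move=> *; rewrite /del m1.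
    + by move=> *; rewrite /del bm_rD m2.
    + by move=> x s y; rewrite /del m3 bm_lr.
  have := @uniqT _ _ _ _ _ mu muu A del hd (fun s => s * a) (fun s => s * f b)
    (fun u v => mulrDl u v a) (fun u v => mulrDl u v (f b)).
  move=> /(_ (fun x y => mur x y a)) /(_ (fun x y => etrans (hmu x y) (mur _ _ _))).
  by move=> /(congr1 (fun g => g 1)) /=; rewrite !mul1r.
Qed.

Lemma bwd (k : comPzRingType) (A B : algType k) (f : B -> A)
  (hf : nu_alg_hom f) (hcent : forall a : A, a * f 1 = f 1 * a) :
  ((injective f /\ (forall x : A, in_left_ideal (f 1) x -> exists b : B, f b = x))
   /\ (forall a : A, (a * f 1 = 0 \/ f 1 * a = 0) -> a = 0)) ->
  invertible_bimod (modulation hf).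
Proof.
case=> [[finj fsurj] nzd].
have hf' := hf; case: hf' => hD hZ hM.
have idem : f 1 * f 1 = f 1 by rewrite -hM mulr1.
have e1 : f 1 = 1.
  apply/esym/eqP; rewrite -subr_eq0; apply/eqP/nzd; left.
  by rewrite mulrBl mul1r idem subrr.
have allI : forall v : A, in_left_ideal (f 1) v by move=> v; exists v; rewrite e1 mulr1.
have ex : forall a : A, exists b, f b == a.
  by move=> a; have [b hb] := fsurj a (allI a); exists b; apply/eqP.
pose g (a : A) : B := xchoose (ex a).
have fg : forall a, f (g a) = a by move=> a; apply/eqP; apply: (xchooseP (ex a)).
have gf : forall b, g (f b) = b by move=> b; apply: finj; rewrite fg.
have gD : forall u v, g (u + v) = g u + g v.
  by move=> u v; apply: finj; rewrite hD !fg.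
have gM : forall u v, g (u * v) = g u * g v.
  by move=> u v; apply: finj; rewrite hM !fg.
pose X := modulation hf.
pose Y := @invY k A B f hf e1.
pose x1 : X := exist _ 1 (allI 1).
exists Y; split.
- exists (fun (x : X) (y : Y) => proj1_sig x * (y : A)); split.
  + split.
    * by move=> x x' y /=; rewrite mulrDl.
    * by move=> x y y' /=; rewrite mulrDr.
    * by move=> x s y /=; rewrite mulrA.
  + by move=> r x y /=; rewrite mulrA.
  + by move=> x y r /=; rewrite mulrA.
  + move=> M beta [b1 b2 b3].
    exists (fun a : A => beta x1 a); split.
    * by move=> u v; rewrite -b2.
    * move=> x y.
      have -> : x = bm_r x1 (g (proj1_sig x)) by apply: sigE' => /=; rewrite fg mul1r.
      by rewrite b3 /= fg mul1r.
    * move=> psi _ hpsi; apply: functional_extensionality => a.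
      by rewrite (hpsi x1 a) /= mul1r.
- exists (fun (y : Y) (x : X) => g ((y : A) * proj1_sig x)); split.
  + split.
    * by move=> y y' x /=; rewrite mulrDl gD.
    * by move=> y x x' /=; rewrite mulrDr gD.
    * by move=> y s x /=; rewrite mulrA.
  + by move=> r y x /=; rewrite -mulrA gM gf.
  + by move=> y x r /=; rewrite mulrA gM gf.
  + move=> M beta [b1 b2 b3].
    exists (fun s : B => beta (1 : A) (bm_r x1 s)); split.
    * by move=> u v; rewrite bm_Dr b2.
    * move=> y x.
      have hy : @bm_r _ _ _ Y (1 : A) y = y by rewrite /= mul1r.
      rewrite -[in LHS]hy b3; congr (beta _ _); apply: sigE' => /=.
      by rewrite fg mul1r.
    * move=> psi _ hpsi; apply: functional_extensionality => s.
      by rewrite (hpsi (1 : A) (bm_r x1 s)) /= !mul1r gf.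
Qed.

Theorem lemma2p3 (k : comPzRingType) (A B : algType k) (f : B -> A)
  (hf : nu_alg_hom f) (hcent : forall a : A, a * f 1 = f 1 * a) :
  invertible_bimod (modulation hf) <->
  ((injective f /\ (forall x : A, in_left_ideal (f 1) x -> exists b : B, f b = x))
   /\ (forall a : A, (a * f 1 = 0 \/ f 1 * a = 0) -> a = 0)).
Proof. by split; [apply: fwd | apply: bwd]. Qed.
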